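(* Let $T$ be a complete first-order theory with monster model $\mathfrak C$. All complete types in $S(\emptyset)$, in arbitrary (possibly unboundedly many) variables, are amenable if and only if all finitary complete types in $S(\emptyset)$ (i.e. in finitely many variables) are amenable.
   Context: $\mathfrak C$ is $\kappa$-saturated and strongly $\kappa$-homogeneous for a large $\kappa$. For a type $\pi(\bar x)$ over $\emptyset$, $S_\pi(\mathfrak C)=\{q\in S_{\bar x}(\mathfrak C):\pi\subseteq q\}$ with the natural $\mathrm{Aut}(\mathfrak C)$-action; $\pi$ is amenable if there is an $\mathrm{Aut}(\mathfrak C)$-invariant regular Borel probability measure on $S_\pi(\mathfrak C)$ (equivalently, an $\mathrm{Aut}(\mathfrak C)$-invariant finitely additive probability measure on $\mathfrak C$-definable sets in variables $\bar x$ giving measure $0$ to each formula inconsistent with $\pi$). *)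

(* Defs.v *)
From Stdlib Require Import Reals List.
Open Scope R_scope.

Set Implicit Arguments.

Definition arg (n : nat) : Type := { i : nat | (i < n)%nat }.

Record language : Type := Language {
  func : Type;
  rel : Type;
  farity : func -> nat;
  rarity : rel -> nat }.

Inductive term (L : language) (X : Type) : Type :=
| TVar : X -> term L X
| TApp : forall f : func L, (arg (farity L f) -> term L X) -> term L X.

(* formulas with free variables from X; FAll binds the new variable None *)
Inductive formula (L : language) (X : Type) : Type :=
| FBot : formula L X
| FEq : term L X -> term L X -> formula L X
| FRel : forall r : rel L, (arg (rarity L r) -> term L X) -> formula L X
| FImp : formula L X -> formula L X -> formula L X
| FAll : formula L (option X) -> formula L X.

Arguments FBot {L X}.
Arguments FEq {L X}.
Arguments FRel {L X}.
Arguments FImp {L X}.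
Arguments FAll {L X}.

Definition FNeg {L X} (p : formula L X) : formula L X := FImp p FBot.
Definition FTop {L X} : formula L X := FNeg FBot.
Definition FOr {L X} (p q : formula L X) : formula L X := FImp (FNeg p) q.

Fixpoint tmap {L : language} {X Y : Type} (h : X -> Y) (t : term L X) : term L Y :=
  match t with
  | TVar _ x => TVar L (h x)
  | TApp f a => TApp f (fun i => tmap h (a i))
  end.

Fixpoint fmap {L : language} {X Y : Type} (h : X -> Y) (p : formula L X)
  : formula L Y :=
  match p with
  | FBot => FBot
  | FEq t u => FEq (tmap h t) (tmap h u)
  | FRel r a => FRel r (fun i => tmap h (a i))
  | FImp p q => FImp (fmap h p) (fmap h q)
  | FAll p => FAll (fmap (option_map h) p)
  end.

Record structure (L : language) : Type := Structure {
  dom : Type;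
  ifun : forall f : func L, (arg (farity L f) -> dom) -> dom;
  irel : forall r : rel L, (arg (rarity L r) -> dom) -> Prop }.

Arguments dom {L}.
Arguments ifun {L}.
Arguments irel {L}.

Definition scons {D X : Type} (m : D) (s : X -> D) : option X -> D :=
  fun o => match o with Some x => s x | None => m end.

Fixpoint teval {L : language} (M : structure L) {X : Type} (s : X -> dom M)
  (t : term L X) : dom M :=
  match t with
  | TVar _ x => s x
  | TApp f a => ifun M f (fun i => teval M s (a i))
  end.

Fixpoint sat {L : language} (M : structure L) {X : Type} (s : X -> dom M)
  (p : formula L X) : Prop :=
  match p with
  | FBot => False
  | FEq t u => teval M s t = teval M s u
  | FRel r a => irel M r (fun i => teval M s (a i))
  | FImp p q => sat M s p -> sat M s q
  | FAll p => forall m : dom M, sat M (scons m s) p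
  end.

Definition automorphism {L : language} (M : structure L) (g : dom M -> dom M)
  : Prop :=
  (exists h : dom M -> dom M, (forall x, h (g x) = x) /\ (forall y, g (h y) = y))
  /\ (forall f a, g (ifun M f a) = ifun M f (fun i => g (a i)))
  /\ (forall r a, irel M r a <-> irel M r (fun i => g (a i))).

Definition card_le (A B : Type) : Prop :=
  exists f : A -> B, forall x y, f x = f y -> x = y.
Definition card_lt (A B : Type) : Prop := card_le A B /\ ~ card_le B A.

Definition saturated {L : language} (K : Type) (M : structure L) : Prop :=
  forall (A : Type) (a : A -> dom M), card_lt A K ->
  forall q : formula L (option A) -> Prop,
    (forall l : list (formula L (option A)), Forall q l ->
       exists m : dom M, Forall (sat M (scons m a)) l) ->
    exists m : dom M, forall p, q p -> sat M (scons m a) p.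

Definition strongly_homogeneous {L : language} (K : Type) (M : structure L)
  : Prop :=
  forall (A : Type) (a b : A -> dom M), card_lt A K ->
    (forall p : formula L A, sat M a p <-> sat M b p) ->
    exists g, automorphism M g /\ forall x, g (a x) = b x.

(* assignment for formulas with parameters from C : variables inl, params inr *)
Definition passign {L : language} (C : structure L) {I : Type}
  (s : I -> dom C) : I + dom C -> dom C :=
  fun v => match v with inl i => s i | inr c => c end.

Definition psat {L : language} (C : structure L) {I : Type} (s : I -> dom C)
  (p : formula L (I + dom C)) : Prop := sat C (passign C s) p.

(* complete type over the empty set (relative to Th(C)) in variables I:
   a finitely satisfiable set of L-formulas in the variables I containing
   each formula or its negation *)
Definition complete_type {L : language} (C : structure L) {I : Type}
  (p : formula L I -> Prop) : Prop :=
  (forall l : list (formula L I), Forall p l ->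
     exists s : I -> dom C, Forall (sat C s) l)
  /\ (forall q : formula L I, p q \/ p (FNeg q)).

Definition inconsistent_with {L : language} (C : structure L) {I : Type}
  (p : formula L I -> Prop) (q : formula L (I + dom C)) : Prop :=
  exists l : list (formula L I), Forall p l /\
    ~ exists s : I -> dom C,
        Forall (sat C s) l /\ psat C s q.

Definition act {L : language} (C : structure L) {I : Type}
  (g : dom C -> dom C) (q : formula L (I + dom C)) : formula L (I + dom C) :=
  fmap (fun v => match v with inl i => inl i | inr c => inr (g c) end) q.

(* p is amenable: there is an Aut(C)-invariant finitely additive probability
   measure on the C-definable sets in the variables I (definable sets are
   represented by formulas with parameters, modulo equivalence in C) which
   vanishes on the definable sets inconsistent with p *)
Definition amenable {L : language} (C : structure L) {I : Type}
  (p : formula L I -> Prop) : Prop :=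
  exists mu : formula L (I + dom C) -> R,
    (forall q q', (forall s, psat C s q <-> psat C s q') -> mu q = mu q')
    /\ (forall q, 0 <= mu q)
    /\ mu FTop = 1
    /\ (forall q q', (forall s, ~ (psat C s q /\ psat C s q')) ->
          mu (FOr q q') = mu q + mu q')
    /\ (forall g q, automorphism C g -> mu (act C g q) = mu q)
    /\ (forall q, inconsistent_with C p q -> mu q = 0).

(* Main.v *)
Require Import Defs.
From Stdlib Require Import Reals List Lra Lia Classical ClassicalEpsilon FunctionalExtensionality ProofIrrelevance.
Open Scope R_scope.
Unset Implicit Arguments.

Module UFm.
From mathcomp Require Import all_boot classical_sets boolp filter.
Lemma ultra_exists (D J : Type) (cone : J -> D -> Prop) :
  inhabited J ->
  (forall i j, exists k, forall x, cone k x -> cone i x /\ cone j x) ->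
  (forall i, exists x, cone i x) ->
  exists U : (D -> Prop) -> Prop,
    (forall i, U (cone i)) /\ U (fun _ => True) /\
    (forall A B, U A -> U B -> U (fun x => A x /\ B x)) /\
    (forall A B, (forall x, A x -> B x) -> U A -> U B) /\
    (forall A, U A -> exists x, A x) /\
    (forall A, U A \/ U (fun x => ~ A x)).
Proof.
move=> [j0] Hk Hne.
have FF : Filter (filter_from setT cone).
  apply: filter_fromT_filter; first by exists j0.
  move=> i j; have [k Hk'] := Hk i j; exists k => x /Hk' [? ?]; by split.
have PF : ProperFilter (filter_from setT cone).
  apply: filter_from_proper => i _; have [x Hx] := Hne i; by exists x.
have [U [UU sub]] := ultraFilterLemma PF.
exists U; split; [|split; [|split; [|split; [|split]]]].
- move=> i; apply: sub; by exists i.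
- exact: (@filterT _ U _).
- move=> A B HA HB; exact: (@filterI _ U _ A B HA HB).
- move=> A B AB HA; exact: (@filterS _ U _ A B AB HA).
- move=> A HA; exact: (@filter_ex _ U _ A HA).
- move=> A; exact: (@in_ultra_setVsetC _ U A UU).
Qed.
End UFm.
Import UFm.
Unset Asymmetric Patterns.
Set Bullet Behavior "Strict Subproofs".

Section Syn.
Variable L : language.

Lemma tmap_ext {X Y} (h h' : X -> Y) (t : term L X) :
  (forall x, h x = h' x) -> tmap h t = tmap h' t.
Proof.
  intro E; induction t as [x|f a IH]; simpl.
  - now rewrite E.
  - f_equal; apply functional_extensionality; intro i; apply IH.
Qed.

Lemma fmap_ext {X Y} (h h' : X -> Y) (p : formula L X) :
  (forall x, h x = h' x) -> fmap h p = fmap h' p.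
Proof.
  revert Y h h'; induction p as [X|X t u|X r a|X p IHp q IHq|X p IH]; intros Y h h' E; simpl.
  - reflexivity.
  - now rewrite (tmap_ext _ _ t E), (tmap_ext _ _ u E).
  - f_equal; apply functional_extensionality; intro i; now apply tmap_ext.
  - now rewrite (IHp _ _ _ E), (IHq _ _ _ E).
  - f_equal; apply IH; intros [x|]; simpl; now rewrite ?E.
Qed.

Lemma tmap_comp {X Y Z} (h : Y -> Z) (g : X -> Y) (t : term L X) :
  tmap h (tmap g t) = tmap (fun x => h (g x)) t.
Proof.
  induction t as [x|f a IH]; simpl; auto.
  f_equal; apply functional_extensionality; intro i; apply IH.
Qed.

Lemma fmap_comp {X Y Z} (h : Y -> Z) (g : X -> Y) (p : formula L X) :
  fmap h (fmap g p) = fmap (fun x => h (g x)) p.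
Proof.
  revert Y Z h g; induction p as [X|X t u|X r a|X p IHp q IHq|X p IH]; intros Y Z h g; simpl.
  - reflexivity.
  - now rewrite !tmap_comp.
  - f_equal; apply functional_extensionality; intro i; now rewrite tmap_comp.
  - now rewrite IHp, IHq.
  - f_equal; rewrite IH; apply fmap_ext; intros [x|]; reflexivity.
Qed.

Lemma teval_tmap (M : structure L) {X Y} (h : X -> Y) (s : Y -> dom M) (s' : X -> dom M)
  (t : term L X) : (forall x, s (h x) = s' x) -> teval M s (tmap h t) = teval M s' t.
Proof.
  intro E; induction t as [x|f a IH]; simpl; auto.
  f_equal; apply functional_extensionality; intro i; apply IH.
Qed.

Lemma sat_fmap (M : structure L) {X} (p : formula L X) : forall Y (h : X -> Y)
  (s : Y -> dom M) (s' : X -> dom M),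
  (forall x, s (h x) = s' x) -> (sat M s (fmap h p) <-> sat M s' p).
Proof.
  induction p as [X|X t u|X r a|X p IHp q IHq|X p IH]; intros Y h s s' E; simpl.
  - tauto.
  - now rewrite !(teval_tmap M h s s' _ E).
  - replace (fun i => teval M s (tmap h (a i))) with (fun i => teval M s' (a i)); [tauto|].
    apply functional_extensionality; intro i; now rewrite (teval_tmap M h s s' _ E).
  - rewrite (IHp _ h s s' E), (IHq _ h s s' E); tauto.
  - assert (E' : forall m (o : option X), scons m s (option_map h o) = scons m s' o)
      by (intros m [x|]; simpl; auto).
    split; intros H m; specialize (H m).
    + exact (proj1 (IH _ (option_map h) (scons m s) (scons m s') (E' m)) H).
    + exact (proj2 (IH _ (option_map h) (scons m s) (scons m s') (E' m)) H).
Qed.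

Fixpoint tvin {X} (P : X -> Prop) (t : term L X) : Prop :=
  match t with TVar _ x => P x | TApp f a => forall i, tvin P (a i) end.
Definition olift {X} (P : X -> Prop) : option X -> Prop :=
  fun o => match o with Some x => P x | None => True end.
Fixpoint fvin {X} (P : X -> Prop) (p : formula L X) : Prop :=
  match p with
  | FBot => True
  | FEq t u => tvin P t /\ tvin P u
  | FRel r a => forall i, tvin P (a i)
  | FImp p q => fvin P p /\ fvin P q
  | FAll p => fvin (olift P) p
  end.

Lemma tmap_id_on {X} (h : X -> X) P (t : term L X) :
  tvin P t -> (forall x, P x -> h x = x) -> tmap h t = t.
Proof.
  intros V E; induction t as [x|f a IH]; simpl in *.
  - now rewrite E.
  - f_equal; apply functional_extensionality; intro i; apply IH, V.
Qed.

Lemma fmap_id_on {X} (p : formula L X) : forall (h : X -> X) P,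
  fvin P p -> (forall x, P x -> h x = x) -> fmap h p = p.
Proof.
  induction p as [X|X t u|X r a|X p IHp q IHq|X p IH]; intros h P V E; simpl in *.
  - reflexivity.
  - destruct V; now rewrite (tmap_id_on h P t), (tmap_id_on h P u).
  - f_equal; apply functional_extensionality; intro i; now apply (tmap_id_on h P (a i) (V i)).
  - destruct V; now rewrite (IHp h P), (IHq h P).
  - f_equal; apply (IH _ _ V); intros [x|] Hx; simpl in *; auto; now rewrite E.
Qed.

Lemma tvin_mono {X} (P Q : X -> Prop) t : tvin P t -> (forall x, P x -> Q x) -> tvin Q t.
Proof. intros V E; induction t; simpl in *; auto. Qed.

Lemma fvin_mono {X} (p : formula L X) : forall (P Q : X -> Prop),
  fvin P p -> (forall x, P x -> Q x) -> fvin Q p.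
Proof.
  induction p as [X|X t u|X r a|X p IHp q IHq|X p IH]; intros P Q V E; simpl in *; auto.
  - destruct V; split; eapply tvin_mono; eauto.
  - intro i; eapply tvin_mono; eauto.
  - destruct V; split; eauto.
  - apply (IH _ _ V); intros [x|]; simpl; auto.
Qed.

Variable I : Type.
Definition supp {X} (pi : X -> option I) (G : list I) : X -> Prop :=
  fun x => match pi x with Some i => In i G | None => True end.

Lemma supp_mono {X} (pi : X -> option I) G G' x :
  incl G G' -> supp pi G x -> supp pi G' x.
Proof. unfold supp; destruct (pi x); auto. Qed.

Lemma fin_collect n (Q : arg n -> list I -> Prop) :
  (forall i G G', incl G G' -> Q i G -> Q i G') -> (forall i, exists G, Q i G) ->
  exists G, forall i, Q i G.
Proof.
  revert Q; induction n as [|n IHn]; intros Q M H.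
  - exists nil; intros [i Hi]; exfalso; inversion Hi.
  - destruct (IHn (fun (k : arg n) G => Q (exist _ (proj1_sig k) (Nat.lt_lt_succ_r _ _ (proj2_sig k))) G))
      as [G1 H1].
    + intros i G G' Hi; apply M; auto.
    + intro i; apply H.
    + destruct (H (exist _ n (Nat.lt_succ_diag_r n))) as [G2 H2].
      exists (G1 ++ G2); intros [k Hk].
      destruct (Nat.eq_dec k n) as [->|Hne].
      * replace Hk with (Nat.lt_succ_diag_r n) by apply proof_irrelevance.
        eapply M; [|exact H2]; intros x Hx; apply in_or_app; auto.
      * assert (Hk' : (k < n)%nat) by lia.
        specialize (H1 (exist _ k Hk')); simpl in H1.
        replace Hk with (Nat.lt_lt_succ_r k n Hk') by apply proof_irrelevance.
        eapply M; [|exact H1]; intros x Hx; apply in_or_app; auto.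
Qed.

Lemma tvin_fin {X} (pi : X -> option I) (t : term L X) : exists G, tvin (supp pi G) t.
Proof.
  induction t as [x|f a IH]; simpl.
  - unfold supp; destruct (pi x) as [i|]; [exists (i :: nil); now left | now exists nil].
  - apply fin_collect; auto.
    intros i G G' Hi V; eapply tvin_mono; [exact V|]; intros; eapply supp_mono; eauto.
Qed.

Lemma fvin_fin {X} (p : formula L X) : forall (pi : X -> option I), exists G, fvin (supp pi G) p.
Proof.
  induction p as [X|X t u|X r a|X p IHp q IHq|X p IH]; intros pi; simpl.
  - now exists nil.
  - destruct (tvin_fin pi t) as [G1 H1]; destruct (tvin_fin pi u) as [G2 H2].
    exists (G1 ++ G2); split.
    + eapply tvin_mono; [exact H1|]; intros x Hx; eapply supp_mono; [|exact Hx].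
      intros z Hz; apply in_or_app; auto.
    + eapply tvin_mono; [exact H2|]; intros x Hx; eapply supp_mono; [|exact Hx].
      intros z Hz; apply in_or_app; auto.
  - apply (fin_collect _ (fun i G => tvin (supp pi G) (a i))).
    + intros i G G' Hi V; eapply tvin_mono; [exact V|]; intros; eapply supp_mono; eauto.
    + intro i; apply tvin_fin.
  - destruct (IHp pi) as [G1 H1]; destruct (IHq pi) as [G2 H2].
    exists (G1 ++ G2); split.
    + eapply fvin_mono; [exact H1|]; intros x Hx; eapply supp_mono; [|exact Hx].
      intros z Hz; apply in_or_app; auto.
    + eapply fvin_mono; [exact H2|]; intros x Hx; eapply supp_mono; [|exact Hx].
      intros z Hz; apply in_or_app; auto.
  - destruct (IH (fun o => match o with Some x => pi x | None => None end)) as [G H].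
    exists G; eapply fvin_mono; [exact H|]; intros [x|]; simpl; unfold supp; auto.
Qed.
End Syn.

Section Ulim.
Variable D : Type.
Variable U : (D -> Prop) -> Prop.
Hypothesis UT : U (fun _ => True).
Hypothesis UI : forall A B, U A -> U B -> U (fun x => A x /\ B x).
Hypothesis US : forall A B, (forall x, A x -> B x) -> U A -> U B.
Hypothesis Uex : forall A, U A -> exists x, A x.
Hypothesis Uul : forall A, U A \/ U (fun x => ~ A x).

Definition islim (f : D -> R) (a : R) := forall eps, eps > 0 -> U (fun x => Rabs (f x - a) < eps).

Lemma ulim_ex (f : D -> R) : (forall x, 0 <= f x <= 1) -> exists a, islim f a.
Proof.
  intros Hb.
  set (S := fun y => U (fun x => y <= f x)).
  assert (Sb : bound S).
  { exists 1; intros y Hy; destruct (Rle_lt_dec y 1) as [h|h]; auto.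
    destruct (Uex _ Hy) as [x Hx]; specialize (Hb x); lra. }
  assert (S0 : exists y, S y).
  { exists 0; unfold S; apply (US (fun _ => True)); auto; intros x _; apply Hb. }
  destruct (completeness S Sb S0) as [a [Hub Hlub]].
  exists a; intros eps He.
  assert (E1 : exists y, S y /\ y > a - eps).
  { apply NNPP; intro N. assert (a <= a - eps); [|lra].
    apply Hlub; intros y Hy; destruct (Rle_lt_dec y (a - eps)) as [h|h]; auto.
    exfalso; apply N; exists y; auto. }
  destruct E1 as [y [Hy Hy']].
  assert (E2 : U (fun x => ~ (a + eps/2 <= f x))).
  { destruct (Uul (fun x => a + eps/2 <= f x)) as [h|h]; auto.
    assert (a + eps/2 <= a) by (apply Hub; exact h); lra. }
  eapply US; [|exact (UI _ _ Hy E2)].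
  intros x [h1 h2]; apply Rabs_def1; lra.
Qed.

Lemma islim_const c : islim (fun _ => c) c.
Proof.
  intros eps He; apply (US (fun _ => True)); auto; intros; rewrite Rminus_diag, Rabs_R0; lra.
Qed.

Lemma islim_add f g h a b c : islim f a -> islim g b -> islim h c ->
  U (fun x => f x = g x + h x) -> a = b + c.
Proof.
  intros Hf Hg Hh E.
  destruct (Rtotal_order (a - b - c) 0) as [d|[d|d]].
  - set (eps := - (a - b - c) / 3).
    assert (He : eps > 0) by (unfold eps; lra).
    destruct (Uex _ (UI _ _ (UI _ _ (Hf eps He) (Hg eps He)) (UI _ _ (Hh eps He) E)))
      as [x [[h1 h2] [h3 h4]]].
    apply Rabs_def2 in h1, h2, h3; unfold eps in *; lra.
  - lra.
  - set (eps := (a - b - c) / 3).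
    assert (He : eps > 0) by (unfold eps; lra).
    destruct (Uex _ (UI _ _ (UI _ _ (Hf eps He) (Hg eps He)) (UI _ _ (Hh eps He) E)))
      as [x [[h1 h2] [h3 h4]]].
    apply Rabs_def2 in h1, h2, h3; unfold eps in *; lra.
Qed.

Lemma islim_eqc f a c : islim f a -> U (fun x => f x = c) -> a = c.
Proof.
  intros Hf E.
  rewrite (islim_add f (fun _ => c) (fun _ => 0) a c 0 Hf (islim_const c) (islim_const 0)); [lra|].
  eapply US; [|exact E]; intros x h; simpl; lra.
Qed.

Lemma islim_eq f g a b : islim f a -> islim g b -> U (fun x => f x = g x) -> a = b.
Proof.
  intros Hf Hg E.
  rewrite (islim_add f g (fun _ => 0) a b 0 Hf Hg (islim_const 0)); [lra|].
  eapply US; [|exact E]; intros x h; simpl; lra.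
Qed.

Lemma islim_nonneg f a : islim f a -> (forall x, 0 <= f x) -> 0 <= a.
Proof.
  intros Hf Hn; destruct (Rle_lt_dec 0 a) as [h|h]; auto.
  destruct (Uex _ (Hf (-a) ltac:(lra))) as [x hx]; apply Rabs_def2 in hx; specialize (Hn x); lra.
Qed.
End Ulim.

Lemma index_data (I : Type) (F : list I) :
  exists n (e : arg n -> I) (r : I -> arg n), forall i, In i F -> e (r i) = i.
Proof.
  induction F as [|j F IH].
  - destruct (classic (inhabited I)) as [[i0]|NI].
    + exists 1%nat, (fun _ => i0), (fun _ => exist _ 0%nat Nat.lt_0_1); intros i [].
    + exists 0%nat, (fun k => match Nat.nlt_0_r _ (proj2_sig k) with end),
        (fun i => match NI (inhabits i) with end); intros i [].
  - destruct IH as [n [e [r H]]].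
    exists (S n),
      (fun k : arg (S n) => match Compare_dec.lt_dec (proj1_sig k) n with
                            | left h => e (exist _ (proj1_sig k) h) | right _ => j end),
      (fun i => match excluded_middle_informative (i = j) with
                | left _ => exist _ n (Nat.lt_succ_diag_r n)
                | right _ => exist _ (proj1_sig (r i)) (Nat.lt_lt_succ_r _ _ (proj2_sig (r i))) end).
    intros i Hi.
    destruct (excluded_middle_informative (i = j)) as [->|Hne]; simpl.
    + destruct (Compare_dec.lt_dec n n); [lia|reflexivity].
    + destruct (Compare_dec.lt_dec (proj1_sig (r i)) n) as [h|h].
      * destruct Hi as [Hi|Hi]; [congruence|].
        rewrite <- (H i Hi) at 2. f_equal. destruct (r i); simpl; f_equal; apply proof_irrelevance.
      * exfalso; apply h, proj2_sig.
Qed.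

Definition liftr {I J D : Type} (r : I -> J) : I + D -> J + D :=
  fun v => match v with inl i => inl (r i) | inr c => inr c end.

Lemma psat_lift (L : language) (C : structure L) I J (r : I -> J) (s : J -> dom C)
  (q : formula L (I + dom C)) :
  psat C s (fmap (liftr r) q) <-> psat C (fun i => s (r i)) q.
Proof.
  unfold psat; apply sat_fmap; intros [i|c]; reflexivity.
Qed.

Lemma list_supp (L : language) I (l : list (formula L I)) :
  exists G : list I, forall phi, In phi l -> fvin L (fun i => In i G) phi.
Proof.
  induction l as [|phi l [G HG]].
  - exists nil; intros _ [].
  - destruct (fvin_fin L I phi Some) as [G1 H1].
    exists (G1 ++ G); intros psi [<-|Hin].
    + eapply fvin_mono; [exact H1|]; intros x Hx; apply in_or_app; left; exact Hx.
    + eapply fvin_mono; [exact (HG _ Hin)|]; intros x Hx; apply in_or_app; right; exact Hx.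
Qed.

Theorem lemma3p6 (L : language) (C : structure L) (K : Type)
  (HK : card_lt (func L + rel L + nat) K)
  (Hsat : saturated K C) (Hhom : strongly_homogeneous K C) :
  (forall (I : Type) (p : formula L I -> Prop),
      complete_type C p -> amenable C p)
  <->
  (forall (n : nat) (p : formula L (arg n) -> Prop),
      complete_type C p -> amenable C p).
Proof.
  split.
  { intros H n p Hp; exact (H (arg n) p Hp). }
  intros Hfin I p Hp.
  assert (HF : forall F : list I, exists mu : formula L (I + dom C) -> R,
    (forall q q', (forall s, psat C s q <-> psat C s q') -> mu q = mu q')
    /\ (forall q, 0 <= mu q) /\ mu FTop = 1
    /\ (forall q q', (forall s, ~ (psat C s q /\ psat C s q')) ->
          mu (FOr q q') = mu q + mu q')
    /\ (forall g q, automorphism C g -> mu (act C g q) = mu q)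
    /\ (forall q l, Forall p l -> (~ exists s, Forall (sat C s) l /\ psat C s q) ->
          (forall phi, In phi l -> fvin L (fun i => In i F) phi) -> mu q = 0)).
  { intro F. destruct (index_data I F) as [n [e [r He]]].
    set (pF := fun psi : formula L (arg n) => p (fmap e psi)).
    assert (Hc : complete_type C pF).
    { split.
      - intros l Hl.
        destruct (proj1 Hp (map (fmap e) l) (proj2 (Forall_map _ _ _) Hl)) as [s Hs].
        exists (fun k => s (e k)).
        apply (proj1 (Forall_map (fmap e) (sat C s) l)) in Hs; eapply Forall_impl; [|exact Hs]; intros phi Hphi.
        exact (proj1 (sat_fmap L C phi _ e s _ (fun _ => eq_refl)) Hphi).
      - intros q; exact (proj2 Hp (fmap e q)). }
    destruct (Hfin n pF Hc) as [mu0 [M1 [M2 [M3 [M4 [M5 M6]]]]]].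
    exists (fun q => mu0 (fmap (liftr r) q)).
    split; [|split; [|split; [|split; [|split]]]].
    - intros q q' E; apply M1; intros s; rewrite !psat_lift; apply E.
    - intros; apply M2.
    - exact M3.
    - intros q q' E; apply (M4 (fmap (liftr r) q) (fmap (liftr r) q')).
      intros s; rewrite !psat_lift; apply E.
    - intros g q Hg. rewrite <- (M5 g (fmap (liftr r) q) Hg). f_equal.
      unfold act; rewrite !fmap_comp; apply fmap_ext; intros [i|c]; reflexivity.
    - intros q l Hl Hn Hv. apply M6. exists (map (fmap r) l). split.
      + apply Forall_map. rewrite Forall_forall in Hl |- *. intros phi Hphi.
        unfold pF; rewrite fmap_comp.
        rewrite (fmap_id_on L phi (fun i => e (r i)) (fun i => In i F) (Hv phi Hphi) He).
        exact (Hl phi Hphi).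
      + intros [s [Hs Hq]]; apply Hn; exists (fun i => s (r i)); split.
        * apply (proj1 (Forall_map (fmap r) (sat C s) l)) in Hs; eapply Forall_impl; [|exact Hs]; intros phi Hphi.
          exact (proj1 (sat_fmap L C phi _ r s _ (fun _ => eq_refl)) Hphi).
        * apply psat_lift; exact Hq. }
  destruct (choice _ HF) as [nu Hnu].
  destruct (ultra_exists (list I) (list I) (fun G F => incl G F)) as
    [U [Ucone [UT [UI [US [Uex Uul]]]]]].
  { exact (inhabits nil). }
  { intros G1 G2; exists (G1 ++ G2); intros x Hx; split; intros z Hz; apply Hx, in_or_app; auto. }
  { intros G; exists G; apply incl_refl. }
  assert (Hb : forall q F, 0 <= nu F q <= 1).
  { intros q F; destruct (Hnu F) as [N1 [N2 [N3 [N4 _]]]].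
    split; [apply N2|].
    assert (E : nu F (FOr q (FNeg q)) = nu F q + nu F (FNeg q)).
    { apply N4; intros s [h1 h2]; exact (h2 h1). }
    assert (E2 : nu F (FOr q (FNeg q)) = nu F FTop).
    { apply N1; intros s; unfold psat; simpl; tauto. }
    specialize (N2 (FNeg q)); lra. }
  assert (Hl : forall q, exists a, islim (list I) U (fun F => nu F q) a).
  { intros q; eapply ulim_ex; eauto. }
  destruct (choice _ Hl) as [mu Hmu].
  exists mu; split; [|split; [|split; [|split; [|split]]]].
  - intros q q' E. eapply islim_eq; eauto.
    apply (US (fun _ => True)); auto; intros F _; apply (proj1 (Hnu F)); exact E.
  - intros q; eapply islim_nonneg; eauto; intros F; apply (Hb q F).
  - eapply islim_eqc; eauto.
    apply (US (fun _ => True)); auto; intros F _; apply (Hnu F).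
  - intros q q' E. eapply islim_add; eauto.
    apply (US (fun _ => True)); auto; intros F _; apply (Hnu F); exact E.
  - intros g q Hg. eapply islim_eq; eauto.
    apply (US (fun _ => True)); auto; intros F _; apply (Hnu F); exact Hg.
  - intros q [l [Hlp Hn]]. destruct (list_supp L I l) as [G HG].
    eapply islim_eqc; eauto.
    refine (US _ _ _ (Ucone G)). intros F HGF; simpl.
    destruct (Hnu F) as [_ [_ [_ [_ [_ N6]]]]].
    apply (N6 q l Hlp Hn). intros phi Hphi.
    eapply fvin_mono; [exact (HG phi Hphi)|]; intros i Hi; exact (HGF i Hi).
Qed.
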